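(* Let $q$ be a prime power and let $R$ be a finite ring containing the field $\mathbb{F}_q$ as a subring. Let $d=\dim_{\mathbb{F}_q}R$ (so $\#R=q^d$), let $r^*$ be the number of units of $R$, and let $v=\#\mathbb{P}(R)$ be the number of points of the chain geometry $\Sigma(\mathbb{F}_q,R)$. For $i=0,1,2,3$ let $\lambda_i$ denote the number of chains containing $i$ given mutually distant points (this number does not depend on the choice of the points). Then \[ \lambda_0=\frac{v\,q^{d-1}r^*}{q^2-1}\,\lambda_3,\qquad \lambda_1=\frac{q^{d-1}r^*}{q-1}\,\lambda_3,\qquad \lambda_2=\frac{r^*}{q-1}\,\lambda_3 . \]
   Context: All rings are associative with unit element $1\neq 0$, and subrings share the unit. $R^2$ is regarded as a left $R$-module. The projective line $\mathbb{P}(R)$ is the set of all submodules of $R^2$ of the form $R(a,b)$ where $(a\ b)$ is the first row of some invertible $2\times 2$ matrix over $R$. For a field $K\subseteq R$ (as a subring), $\mathbb{P}(K)$ is embedded in $\mathbb{P}(R)$ via $K(a,b)\mapsto R(a,b)$. The chain geometry $\Sigma(K,R)$ has point set $\mathbb{P}(R)$ and its blocks, called chains, are the sets $\mathbb{P}(K)^g$ with $g\in \mathrm{GL}_2(R)$ (acting on $R^2$ from the right). Two points $R(a,b)$, $R(c,d)$ are distant if $\begin{pmatrix}a&b\\c&d\end{pmatrix}\in\mathrm{GL}_2(R)$. In particular $\lambda_0$ is the total number of chains and $\lambda_1$ the number of chains through a given point. *)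

(* Defs.v *)
From HB Require Import structures.
From mathcomp Require Import all_boot all_order all_algebra.
Set Implicit Arguments. Unset Strict Implicit. Unset Printing Implicit Defensive.
Import GRing.Theory.
Local Open Scope ring_scope.

Section ChainGeometry.
Variable R : finUnitRingType.

Definition invertible2 (M : 'M[R]_2) : bool :=
  [exists N : 'M[R]_2, (M *m N == 1%:M) && (N *m M == 1%:M)].

Definition submod (a : 'rV[R]_2) : {set 'rV[R]_2} := [set x *: a | x : R].

Definition admissible (a : 'rV[R]_2) : bool :=
  [exists M : 'M[R]_2, invertible2 M && (row 0 M == a)].

Definition proj_line : {set {set 'rV[R]_2}} :=
  [set p | [exists a, admissible a && (p == submod a)]].

Definition pt_act (p : {set 'rV[R]_2}) (g : 'M[R]_2) : {set 'rV[R]_2} :=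
  [set v *m g | v in p].

Variable K : {set R}.

Definition matrix_over (M : 'M[R]_2) : bool := [forall i, forall j, M i j \in K].
Definition row_over (a : 'rV[R]_2) : bool := [forall j, a 0 j \in K].

Definition invertible2_over (M : 'M[R]_2) : bool :=
  matrix_over M &&
  [exists N : 'M[R]_2, [&& matrix_over N, M *m N == 1%:M & N *m M == 1%:M]].

(* P(K) embedded in P(R) via K(a,b) |-> R(a,b) *)
Definition base_chain : {set {set 'rV[R]_2}} :=
  [set submod a | a in [pred a : 'rV[R]_2 |
     row_over a && [exists M, invertible2_over M && (row 0 M == a)]]].

Definition chains : {set {set {set 'rV[R]_2}}} :=
  [set [set pt_act p g | p in base_chain] | g in [pred g | invertible2 g]].

Definition distant (p1 p2 : {set 'rV[R]_2}) : bool :=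
  [exists a, exists c,
     [&& p1 == submod a, p2 == submod c & invertible2 (col_mx a c)]].

Definition nchains_through (s : seq {set 'rV[R]_2}) : nat :=
  #|[set C in chains | all (fun p => p \in C) s]|.

End ChainGeometry.

Definition is_subfield (R : finUnitRingType) (K : {set R}) : Prop :=
  [/\ 1 \in K,
      (forall x y, x \in K -> y \in K -> x - y \in K),
      (forall x y, x \in K -> y \in K -> x * y \in K),
      (forall x y, x \in K -> y \in K -> x * y = y * x) &
      (forall x, x \in K -> x != 0 -> (x \is a GRing.unit) /\ x^-1 \in K)].

(* Main.v *)
Require Import Defs.
From mathcomp Require Import all_boot all_order all_algebra.
From mathcomp Require Import ring.
Set Implicit Arguments. Unset Strict Implicit. Unset Printing Implicit Defensive.
Import GRing.Theory.
Local Open Scope ring_scope.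

Section M2.
Variable R : finUnitRingType.

Definition rw2 (x y : R) : 'rV[R]_2 := \row_(j < 2) if j == ord0 then x else y.
Definition mx2 (a b c d : R) : 'M[R]_2 :=
  \matrix_(i < 2, j < 2) if i == ord0 then (if j == ord0 then a else b)
                         else (if j == ord0 then c else d).

Lemma ord2P (P : 'I_2 -> Prop) : P ord0 -> P (lift ord0 ord0) -> forall i, P i.
Proof.
move=> H0 H1 [[|[|//]] Hi].
  by rewrite (_ : Ordinal Hi = ord0) //; apply: val_inj.
by rewrite (_ : Ordinal Hi = lift ord0 ord0) //; apply: val_inj.
Qed.

Lemma rw2_eta (a : 'rV[R]_2) : a = rw2 (a 0 0) (a 0 (lift ord0 ord0)).
Proof.
apply/matrixP=> i j; rewrite !mxE (ord1 i).
by elim/ord2P: j.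
Qed.

Lemma mx2_eta (M : 'M[R]_2) :
  M = mx2 (M 0 0) (M 0 (lift ord0 ord0)) (M (lift ord0 ord0) 0) (M (lift ord0 ord0) (lift ord0 ord0)).
Proof. by apply/matrixP=> i j; rewrite !mxE; elim/ord2P: i; elim/ord2P: j. Qed.

Lemma rw2_inj x y x' y' : rw2 x y = rw2 x' y' -> x = x' /\ y = y'.
Proof.
move/matrixP=> H; split.
  by have := H 0 0; rewrite !mxE.
by have := H 0 (lift ord0 ord0); rewrite !mxE.
Qed.

Lemma mx2_inj a b c d a' b' c' d' : mx2 a b c d = mx2 a' b' c' d' ->
  [/\ a = a', b = b', c = c' & d = d'].
Proof.
move/matrixP=> H; split.
- by have := H 0 0; rewrite !mxE.
- by have := H 0 (lift ord0 ord0); rewrite !mxE.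
- by have := H (lift ord0 ord0) 0; rewrite !mxE.
- by have := H (lift ord0 ord0) (lift ord0 ord0); rewrite !mxE.
Qed.

Lemma mx2_mul a b c d a' b' c' d' :
  mx2 a b c d *m mx2 a' b' c' d' =
  mx2 (a * a' + b * c') (a * b' + b * d') (c * a' + d * c') (c * b' + d * d').
Proof.
apply/matrixP=> i j; rewrite !mxE !big_ord_recl big_ord0 !mxE addr0 /=.
by elim/ord2P: i; elim/ord2P: j.
Qed.

Lemma rw2_mul x y a b c d :
  rw2 x y *m mx2 a b c d = rw2 (x * a + y * c) (x * b + y * d).
Proof.
apply/matrixP=> i j; rewrite !mxE !big_ord_recl big_ord0 !mxE addr0 /=.
by elim/ord2P: j.
Qed.

Lemma rw2_scale u x y : u *: rw2 x y = rw2 (u * x) (u * y).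
Proof. by apply/matrixP=> i j; rewrite !mxE; elim/ord2P: j. Qed.

Lemma col_rw2 a b c d : col_mx (rw2 a b) (rw2 c d) = mx2 a b c d.
Proof.
apply/matrixP=> i j; elim/ord2P: i.
  rewrite (_ : ord0 = lshift 1 (ord0 : 'I_1)); last by apply: val_inj.
  by rewrite col_mxEu !mxE.
rewrite (_ : (lift ord0 ord0 : 'I_2) = rshift 1 (ord0 : 'I_1)); last by apply: val_inj.
by rewrite col_mxEd !mxE.
Qed.

Lemma row0_mx2 a b c d : row 0 (mx2 a b c d) = rw2 a b.
Proof. by apply/matrixP=> i j; rewrite !mxE. Qed.

Lemma mx2_1 : (1%:M : 'M[R]_2) = mx2 1 0 0 1.
Proof. by apply/matrixP=> i j; rewrite !mxE; elim/ord2P: i; elim/ord2P: j. Qed.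


Notation i1 := (lift ord0 ord0).

Lemma inv2P (M : 'M[R]_2) : invertible2 M ->
  exists N, M *m N = 1%:M /\ N *m M = 1%:M.
Proof. by case/existsP=> N /andP[/eqP H1 /eqP H2]; exists N. Qed.

Lemma inv2_intro (M N : 'M[R]_2) : M *m N = 1%:M -> N *m M = 1%:M -> invertible2 M.
Proof. by move=> H1 H2; apply/existsP; exists N; rewrite H1 H2 !eqxx. Qed.

Lemma inv2_mul (A B : 'M[R]_2) : invertible2 A -> invertible2 B -> invertible2 (A *m B).
Proof.
case/inv2P=> NA [HA1 HA2]; case/inv2P=> NB [HB1 HB2].
apply: (@inv2_intro _ (NB *m NA)).
  by rewrite mulmxA -(mulmxA A) HB1 mulmx1 HA1.
by rewrite mulmxA -(mulmxA NB) HA2 mulmx1 HB2.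
Qed.

Lemma inv2_1 : invertible2 (1%:M : 'M[R]_2).
Proof. by apply: (@inv2_intro _ 1%:M); rewrite mulmx1. Qed.

Lemma inv2_upper u b w : u \is a GRing.unit -> w \is a GRing.unit ->
  invertible2 (mx2 u b 0 w).
Proof.
move=> Hu Hw.
apply: (@inv2_intro _ (mx2 u^-1 (- (u^-1 * b * w^-1)) 0 w^-1));
  rewrite mx2_mul mx2_1 !(mulr0, mul0r, addr0, add0r).
  by rewrite mulrV // mulrV // mulrN !mulrA mulrV // mul1r addNr.
by rewrite (mulVr Hu) (mulVr Hw) mulNr (divrK Hw) addrN.
Qed.

Lemma inv2_lower x : invertible2 (mx2 1 0 x 1).
Proof.
apply: (@inv2_intro _ (mx2 1 0 (- x) 1));
  rewrite mx2_mul mx2_1 !(mulr0, mul0r, addr0, add0r, mulr1, mul1r).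
  by rewrite addrN.
by rewrite addNr.
Qed.


Lemma inv2_sw : invertible2 (mx2 (0 : R) 1 1 0).
Proof.
by apply: (@inv2_intro _ (mx2 0 1 1 0));
  rewrite mx2_mul mx2_1 !(mulr0, mul0r, addr0, add0r, mulr1, mul1r).
Qed.

Lemma inv2_10 x y : invertible2 (mx2 1 0 x y) -> y \is a GRing.unit.
Proof.
case/inv2P=> N []; rewrite [N]mx2_eta !mx2_mul mx2_1.
case/mx2_inj=> _ H01 _ H11; case/mx2_inj=> _ _ _ H11'.
move: H01 H11 H11'; rewrite !(mul1r, mul0r, addr0, add0r, mulr0) => -> .
rewrite mulr0 add0r => H1 H2.
by apply/unitrP; eexists; split; eassumption.
Qed.

Lemma inv2_01 x y : invertible2 (mx2 0 1 x y) -> x \is a GRing.unit.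
Proof.
case/inv2P=> N []; rewrite [N]mx2_eta !mx2_mul mx2_1.
case/mx2_inj=> _ H01 _ H11; case/mx2_inj=> H00' _ _ _.
move: H01 H11 H00'; rewrite !(mul1r, mul0r, addr0, add0r, mulr0) => -> .
rewrite mulr0 addr0 => H1 H2.
by apply/unitrP; eexists; split; eassumption.
Qed.

Lemma inv2_same (a : 'rV[R]_2) : ~~ invertible2 (col_mx a a).
Proof.
apply/negP; case/inv2P=> N [H _]; move: H.
rewrite [a]rw2_eta col_rw2 [N]mx2_eta mx2_mul mx2_1; case/mx2_inj=> H1 _ H2 _.
by move: (@oner_neq0 R); rewrite -H1 H2 eqxx.
Qed.

Lemma fin_unit (x y : R) : y * x = 1 -> x \is a GRing.unit.
Proof.
move=> Hyx.
have inj : injective (fun z : R => x * z).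
  by move=> z1 z2 /= /(congr1 (fun t => y * t)); rewrite !mulrA Hyx !mul1r.
have [g gK Kg] := injF_bij inj.
have Hxg : x * g 1 = 1 by exact: Kg.
have Hy : y = g 1 by rewrite -[y]mulr1 -Hxg mulrA Hyx mul1r.
by apply/unitrP; exists y; rewrite Hyx Hy Hxg.
Qed.

Lemma submodP (a b : 'rV[R]_2) : reflect (exists x, b = x *: a) (b \in submod a).
Proof.
apply: (iffP imsetP).
  by case=> x _ ->; exists x.
by case=> x ->; exists x.
Qed.

Lemma submod_self (a : 'rV[R]_2) : a \in submod a.
Proof. by apply/submodP; exists 1; rewrite scale1r. Qed.

Lemma submod_scale u (a : 'rV[R]_2) : u \is a GRing.unit -> submod (u *: a) = submod a.
Proof.
move=> Hu; apply/setP=> b; apply/submodP/submodP; case=> x ->.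
  by exists (x * u); rewrite scalerA.
by exists (x * u^-1); rewrite scalerA -mulrA (mulVr Hu) mulr1.
Qed.

Lemma pt_act_submod (a : 'rV[R]_2) g : pt_act (submod a) g = submod (a *m g).
Proof.
apply/setP=> b; apply/imsetP/submodP.
  by case=> v /submodP[x ->] ->; exists x; rewrite scalemxAl.
by case=> x ->; exists (x *: a); [apply/submodP; exists x | rewrite scalemxAl].
Qed.

Lemma pt_act_mul (p : {set 'rV[R]_2}) A B : pt_act (pt_act p A) B = pt_act p (A *m B).
Proof.
rewrite /pt_act -imset_comp; apply: eq_imset => v /=; by rewrite mulmxA.
Qed.

Lemma pt_act1 (p : {set 'rV[R]_2}) : pt_act p 1%:M = p.
Proof.
rewrite /pt_act (eq_imset (g := id)) ?imset_id // => v; exact: mulmx1.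
Qed.

Lemma pt_act_inj (g : 'M[R]_2) : invertible2 g -> injective (fun p : {set 'rV[R]_2} => pt_act p g).
Proof.
case/inv2P=> N [H1 _] p p' /= /(congr1 (fun s => pt_act s N)).
by rewrite !pt_act_mul H1 !pt_act1.
Qed.

Lemma admP (a : 'rV[R]_2) : reflect (exists2 M, invertible2 M & row 0 M = a) (admissible a).
Proof.
apply: (iffP existsP).
  by case=> M /andP[H /eqP E]; exists M.
by case=> M H E; exists M; rewrite H E eqxx.
Qed.

Lemma adm_mul (a : 'rV[R]_2) g : admissible a -> invertible2 g -> admissible (a *m g).
Proof.
case/admP=> M HM <- Hg; apply/admP; exists (M *m g); last by rewrite row_mul.
exact: inv2_mul.
Qed.

Lemma adm_rw2 (a b c d : R) : invertible2 (mx2 a b c d) -> admissible (rw2 a b).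
Proof. by move=> H; apply/admP; exists (mx2 a b c d); rewrite ?row0_mx2. Qed.

Lemma L_unit (a b : 'rV[R]_2) : admissible a -> submod a = submod b ->
  exists2 u, u \is a GRing.unit & b = u *: a.
Proof.
case/admP=> M HM Ea E.
have /submodP[x Hx] : b \in submod a by rewrite E submod_self.
have /submodP[y Hy] : a \in submod b by rewrite -E submod_self.
exists x => //; apply: (@fin_unit x y).
case/inv2P: HM => N [H1 _].
have : (y * x) *: (a *m N) = a *m N.
  by rewrite scalemxAl -scalerA -Hx -Hy.
rewrite -Ea -row_mul H1 mx2_1 row0_mx2 rw2_scale.
by case/rw2_inj; rewrite mulr1.
Qed.

Lemma L_dist (a c : 'rV[R]_2) :
  distant (submod a) (submod c) = invertible2 (col_mx a c).
Proof.
apply/idP/idP; last first.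
  by move=> H; apply/existsP; exists a; apply/existsP; exists c; rewrite !eqxx H.
case/existsP=> a' /existsP[c' /and3P[/eqP Ea /eqP Ec H]].
have Ha' : admissible a'.
  move: H; rewrite [a' in col_mx a' _]rw2_eta [c']rw2_eta col_rw2 => H.
  rewrite [a']rw2_eta; exact: adm_rw2 H.
have Hc' : admissible c'.
  rewrite [a']rw2_eta [c']rw2_eta col_rw2 in H.
  have := inv2_mul inv2_sw H; rewrite mx2_mul.
  rewrite !(mul0r, mul1r, add0r, addr0) => H2.
  rewrite [c']rw2_eta; exact: adm_rw2 H2.
have [u Hu ->] := L_unit Ha' (esym Ea).
have [w Hw ->] := L_unit Hc' (esym Ec).
have -> : col_mx (u *: a') (w *: c') = mx2 u 0 0 w *m col_mx a' c'.
  rewrite [a']rw2_eta [c']rw2_eta !col_rw2 !rw2_scale col_rw2 mx2_mul.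
  by rewrite !(mul0r, add0r, addr0).
by apply: inv2_mul => //; apply: inv2_upper.
Qed.

Lemma projP (p : {set 'rV[R]_2}) :
  reflect (exists2 a, admissible a & p = submod a) (p \in proj_line R).
Proof.
rewrite inE; apply: (iffP existsP).
  by case=> a /andP[H /eqP ->]; exists a.
by case=> a H ->; exists a; rewrite H eqxx.
Qed.


Lemma distant_irr (p : {set 'rV[R]_2}) : ~~ distant p p.
Proof.
apply/negP; case/existsP=> a /existsP[c /and3P[/eqP Ea /eqP Ec H]].
have : distant (submod a) (submod a).
  by rewrite -Ea; apply/existsP; exists a;
     apply/existsP; exists c; rewrite -Ea -Ec !eqxx H.
by rewrite L_dist (negbTE (inv2_same a)).
Qed.


Lemma col_mul (a c : 'rV[R]_2) (N : 'M[R]_2) :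
  ((col_mx a c : 'M[R]_2) *m N) = col_mx (a *m N) (c *m N).
Proof. exact: (@mul_col_mx _ 1 1 2 2 a c N). Qed.

Definition E1 := submod (rw2 1 0).
Definition E2 := submod (rw2 0 1).
Definition E3 := submod (rw2 1 1).

Lemma rw10_col (a c : 'rV[R]_2) : rw2 1 0 *m col_mx a c = a.
Proof.
rewrite [a]rw2_eta [c]rw2_eta col_rw2 rw2_mul.
by rewrite !(mul1r, mul0r, addr0).
Qed.

Lemma rw01_col (a c : 'rV[R]_2) : rw2 0 1 *m col_mx a c = c.
Proof.
rewrite [a]rw2_eta [c]rw2_eta col_rw2 rw2_mul.
by rewrite !(mul1r, mul0r, add0r).
Qed.

Lemma trans1 p : p \in proj_line R -> exists2 g, invertible2 g & p = pt_act E1 g.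
Proof.
case/projP=> a /admP[M HM <-] ->; exists M => //.
by rewrite /E1 pt_act_submod -(row0_mx2 (1:R) 0 0 1) -mx2_1 -row_mul mul1mx.
Qed.

Lemma trans2 p1 p2 : distant p1 p2 ->
  exists2 g, invertible2 g & p1 = pt_act E1 g /\ p2 = pt_act E2 g.
Proof.
case/existsP=> a /existsP[c /and3P[/eqP -> /eqP -> H]]; exists (col_mx a c) => //.
by rewrite /E1 /E2 !pt_act_submod rw10_col rw01_col.
Qed.

Lemma trans3 t1 t2 t3 : distant t1 t2 -> distant t1 t3 -> distant t2 t3 ->
  exists2 g, invertible2 g &
    [/\ t1 = pt_act E1 g, t2 = pt_act E2 g & t3 = pt_act E3 g].
Proof.
case/existsP=> a /existsP[c /and3P[/eqP Ea /eqP Ec HM]].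
move=> D13 D23.
case/existsP: (D13) => _ /existsP[c3 /and3P[_ /eqP E3' _]].
move: D13 D23; rewrite Ea Ec E3' !L_dist => H13 H23.
have [N [H1 H2]] := inv2P HM.
have HN : invertible2 N by apply: (@inv2_intro _ (col_mx a c)).
have HaN : a *m N = rw2 1 0.
  by rewrite -{1}(rw10_col a c) -mulmxA H1 mulmx1.
have HcN : c *m N = rw2 0 1.
  by rewrite -{1}(rw01_col a c) -mulmxA H1 mulmx1.
have := inv2_mul H13 HN; have := inv2_mul H23 HN.
rewrite !col_mul HaN HcN [c3 *m N]rw2_eta !col_rw2.
set x := (c3 *m N) 0 0; set y := (c3 *m N) 0 i1.
move=> /inv2_01 Hx /inv2_10 Hy.
exists (mx2 x 0 0 y *m col_mx a c).
  by apply: inv2_mul => //; exact: inv2_upper.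
rewrite /E1 /E2 /E3 !pt_act_submod !mulmxA !rw2_mul.
rewrite !(mul1r, mul0r, addr0, add0r).
split.
- have -> : rw2 x 0 = x *: rw2 1 0 by rewrite rw2_scale mulr1 mulr0.
  by rewrite -scalemxAl rw10_col submod_scale.
- have -> : rw2 0 y = y *: rw2 0 1 by rewrite rw2_scale mulr1 mulr0.
  by rewrite -scalemxAl rw01_col submod_scale.
- by rewrite /x /y -rw2_eta -mulmxA H2 mulmx1.
Qed.


Lemma adm_x1 (x : R) : admissible (rw2 x 1).
Proof.
apply: (@adm_rw2 _ _ 1 0).
have -> : mx2 x 1 1 0 = mx2 0 1 1 0 *m mx2 1 0 x 1.
  by rewrite mx2_mul !(mul0r, mul1r, add0r, addr0).
by apply: inv2_mul; [exact: inv2_sw | exact: inv2_lower].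
Qed.

Lemma x1_inj : injective (fun x : R => submod (rw2 x 1)).
Proof.
move=> x y /= E; have [u _] := L_unit (adm_x1 x) E.
rewrite rw2_scale mulr1 => /rw2_inj[H1 H2].
by rewrite H1 -H2 mul1r.
Qed.

Lemma D1E : [set p in proj_line R | distant E1 p] =
  [set submod (rw2 x 1) | x in [set: R]].
Proof.
apply/setP=> p; rewrite inE; apply/andP/imsetP.
  case=> /projP[c _ ->]; rewrite /E1 L_dist [c]rw2_eta col_rw2 => /inv2_10 Hu.
  exists ((c 0 i1)^-1 * c 0 0) => //.
  have Hu' : (c 0 i1)^-1 \is a GRing.unit by rewrite unitrV.
  by rewrite -(submod_scale _ Hu') rw2_scale (mulVr Hu).
case=> x _ ->; split; first by apply/projP; exists (rw2 x 1) => //; exact: adm_x1.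
by rewrite /E1 L_dist col_rw2; exact: inv2_lower.
Qed.

Lemma D1_card : #|[set p in proj_line R | distant E1 p]| = #|R|.
Proof. by rewrite D1E card_imset ?cardsT //; exact: x1_inj. Qed.

Lemma distE2 (x : R) : distant E2 (submod (rw2 x 1)) = (x \is a GRing.unit).
Proof.
rewrite /E2 L_dist col_rw2; apply/idP/idP; first exact: inv2_01.
move=> Hx.
have -> : mx2 0 1 x 1 = mx2 0 1 1 0 *m mx2 x 1 0 1.
  by rewrite mx2_mul !(mul0r, mul1r, add0r, addr0).
by apply: inv2_mul; [exact: inv2_sw | apply: inv2_upper => //; exact: unitr1].
Qed.

Lemma D2_card : #|[set p in proj_line R | distant E1 p && distant E2 p]| =
  #|[set x : R | x \is a GRing.unit]|.
Proof.
have -> : [set p in proj_line R | distant E1 p && distant E2 p] =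
          [set submod (rw2 x 1) | x in [set x : R | x \is a GRing.unit]].
  apply/setP=> p; apply/idP/imsetP.
    rewrite inE andbA => /andP[Hp HE2].
    have : p \in [set p in proj_line R | distant E1 p] by rewrite inE.
    rewrite D1E => /imsetP[x _ Ep]; exists x => //.
    by rewrite inE -distE2 -Ep.
  case=> x; rewrite inE => Hx ->.
  have : submod (rw2 x 1) \in [set submod (rw2 x 1) | x in [set: R]] by apply: imset_f.
  by rewrite -D1E !inE distE2 Hx => /andP[-> ->].
by rewrite card_imset //; exact: x1_inj.
Qed.

Lemma distE1E2 : distant E1 E2.
Proof. by rewrite /E1 /E2 L_dist col_rw2 -mx2_1; exact: inv2_1. Qed.

Section Sub.
Variable K : {set R}.
Hypothesis HK : is_subfield K.

Lemma K1 : 1 \in K. Proof. by case: HK. Qed.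
Lemma KB x y : x \in K -> y \in K -> x - y \in K. Proof. by case: HK => _ H _ _ _; apply: H. Qed.
Lemma KM x y : x \in K -> y \in K -> x * y \in K. Proof. by case: HK => _ _ H _ _; apply: H. Qed.
Lemma KV x : x \in K -> x != 0 -> (x \is a GRing.unit) /\ x^-1 \in K.
Proof. by case: HK => _ _ _ _ H; apply: H. Qed.
Lemma K0 : 0 \in K. Proof. by rewrite -(subrr 1) KB // K1. Qed.
Lemma KN x : x \in K -> - x \in K. Proof. by move=> Hx; rewrite -sub0r KB // K0. Qed.

Definition Nset : {set 'rV[R]_2} := rw2 0 1 |: [set rw2 1 k | k in K].

Lemma Nset_card : #|Nset| = #|K|.+1.
Proof.
rewrite /Nset cardsU1 card_imset; last by move=> k k' /rw2_inj[].
suff -> : rw2 0 1 \notin [set rw2 1 k | k in K] by [].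
apply/imsetP; case=> k _ /rw2_inj[H _].
by move: (@oner_neq0 R); rewrite H eqxx.
Qed.

Lemma NsetP n : reflect (n = rw2 0 1 \/ exists2 k, k \in K & n = rw2 1 k) (n \in Nset).
Proof.
apply: (iffP setU1P); case; try by left.
  by move/imsetP=> [k Hk ->]; right; exists k.
by case=> k Hk ->; right; apply/imsetP; exists k.
Qed.

Lemma Nset_dist n n' : n \in Nset -> n' \in Nset -> n != n' -> invertible2 (col_mx n n').
Proof.
case/NsetP=> [->|[k Hk ->]]; case/NsetP=> [->|[k' Hk' ->]].
- by rewrite eqxx.
- move=> _; rewrite col_rw2.
  have -> : mx2 (0 : R) 1 1 k' = mx2 0 1 1 0 *m mx2 1 k' 0 1.
    by rewrite mx2_mul !(mul0r, mul1r, add0r, addr0).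
  by apply: inv2_mul; [exact: inv2_sw | apply: inv2_upper; exact: unitr1].
- move=> _; rewrite col_rw2; apply: inv2_upper; exact: unitr1.
- move=> Hne; rewrite col_rw2.
  have Hd : k' - k != 0.
    by apply: contraNneq Hne; move/eqP; rewrite subr_eq0 => /eqP ->.
  have [Hu _] := KV (KB Hk' Hk) Hd.
  have -> : mx2 (1 : R) k 1 k' = mx2 1 0 1 1 *m mx2 1 k 0 (k' - k).
    by rewrite mx2_mul !(mul0r, mul1r, add0r, addr0) addrC subrK.
  by apply: inv2_mul; [exact: inv2_lower | apply: inv2_upper => //; exact: unitr1].
Qed.

Lemma Nset_adm n : n \in Nset -> admissible n.
Proof.
case/NsetP=> [->|[k Hk ->]].
  by apply: (@adm_rw2 _ _ 1 0); exact: inv2_sw.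
by apply: (@adm_rw2 _ _ 0 1); apply: inv2_upper; exact: unitr1.
Qed.

Lemma row_nz (a : 'rV[R]_2) : admissible a -> a != 0.
Proof.
case/admP=> M /inv2P[N [H1 _]] <-; apply/negP=> /eqP H0.
have : row 0 (M *m N) = 0 by rewrite row_mul H0 mul0mx.
rewrite H1 mx2_1 row0_mx2 => /matrixP/(_ 0 0); rewrite !mxE /=.
by apply/eqP; exact: oner_neq0.
Qed.

Lemma mxover_mx2 a b c d : a \in K -> b \in K -> c \in K -> d \in K ->
  matrix_over K (mx2 a b c d).
Proof.
move=> Ha Hb Hc Hd; apply/forallP=> i; apply/forallP=> j; rewrite mxE.
by elim/ord2P: i; elim/ord2P: j.
Qed.

Lemma base_chainE : base_chain K = [set submod n | n in Nset].
Proof.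
apply/setP=> p; apply/imsetP/imsetP; case=> a Ha ->.
  move: Ha; rewrite inE => /andP[/forallP Hrow /existsP[M /andP[/andP[_ HM] /eqP Ea]]].
  have Hadm : admissible a.
    case/existsP: HM => N /and3P[_ H1 H2]; apply/admP; exists M => //.
    by apply/existsP; exists N; rewrite H1 H2.
  have Hnz := row_nz Hadm.
  have H0 := Hrow 0; have H1 := Hrow i1.
  rewrite [a]rw2_eta in Hnz *.
  have [a0 | a0] := eqVneq (a 0 0) 0.
    have a1 : a 0 i1 != 0.
      apply: contraNneq Hnz => a1; rewrite a0 a1.
      by apply/eqP/matrixP=> i j; rewrite !mxE; elim/ord2P: j.
    have [Hu _] := KV H1 a1.
    exists (rw2 0 1); first by apply/NsetP; left.
    have -> : rw2 (a 0 0) (a 0 i1) = a 0 i1 *: rw2 0 1 by rewrite rw2_scale mulr0 mulr1 a0.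
    by rewrite submod_scale.
  have [Hu Hi] := KV H0 a0.
  exists (rw2 1 ((a 0 0)^-1 * a 0 i1)).
    by apply/NsetP; right; exists ((a 0 0)^-1 * a 0 i1) => //; apply: KM.
  have -> : rw2 (a 0 0) (a 0 i1) = a 0 0 *: rw2 1 ((a 0 0)^-1 * a 0 i1).
    by rewrite rw2_scale mulr1 mulrA (mulrV Hu) mul1r.
  by rewrite submod_scale.
exists a => //; rewrite inE; case/NsetP: Ha => [->|[k Hk ->]].
  apply/andP; split.
    by apply/forallP=> j; rewrite mxE; elim/ord2P: j; rewrite /= ?K0 ?K1.
  apply/existsP; exists (mx2 0 1 1 0); rewrite row0_mx2 eqxx andbT.
  rewrite /invertible2_over mxover_mx2 ?K0 ?K1 //=.
  apply/existsP; exists (mx2 0 1 1 0); rewrite mxover_mx2 ?K0 ?K1 //=.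
  by rewrite mx2_mul mx2_1 !(mul0r, mul1r, add0r, addr0) eqxx.
apply/andP; split.
  by apply/forallP=> j; rewrite mxE; elim/ord2P: j; rewrite /= ?K0 ?K1.
apply/existsP; exists (mx2 1 k 0 1); rewrite row0_mx2 eqxx andbT.
rewrite /invertible2_over mxover_mx2 ?K0 ?K1 //=.
apply/existsP; exists (mx2 1 (- k) 0 1); rewrite mxover_mx2 ?K0 ?K1 ?KN //=.
rewrite !mx2_mul mx2_1 !(mul0r, mul1r, add0r, addr0, mulr1, mulr0); by rewrite addNr subrr !eqxx.
Qed.


Lemma chainP C : C \in chains K ->
  exists2 g, invertible2 g & C = [set submod (n *m g) | n in Nset].
Proof.
case/imsetP=> g; rewrite inE => Hg ->; exists g => //.
rewrite base_chainE -imset_comp; apply: eq_imset => n /=.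
exact: pt_act_submod.
Qed.

Lemma chain_proj C p : C \in chains K -> p \in C -> p \in proj_line R.
Proof.
case/chainP=> g Hg -> /imsetP[n Hn ->]; apply/projP; exists (n *m g) => //.
by apply: adm_mul => //; exact: Nset_adm.
Qed.

Lemma chain_dist_aux g n n' : invertible2 g -> n \in Nset -> n' \in Nset -> n != n' ->
  distant (submod (n *m g)) (submod (n' *m g)).
Proof.
move=> Hg Hn Hn' Hne; rewrite L_dist -mul_col_mx; apply: inv2_mul => //.
exact: Nset_dist.
Qed.

Lemma chain_dist C p p' : C \in chains K -> p \in C -> p' \in C -> p != p' ->
  distant p p'.
Proof.
case/chainP=> g Hg -> /imsetP[n Hn ->] /imsetP[n' Hn' ->] Hne.
apply: chain_dist_aux => //; by apply: contraNneq Hne => ->.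
Qed.

Lemma chain_card C : C \in chains K -> #|C| = #|K|.+1.
Proof.
case/chainP=> g Hg ->; rewrite card_in_imset ?Nset_card // => n n' Hn Hn' E.
apply/eqP; apply/negPn/negP => Hne.
have := chain_dist_aux Hg Hn Hn' Hne; rewrite E.
by move/negP: (distant_irr (submod (n' *m g))).
Qed.

Definition cact (C : {set {set 'rV[R]_2}}) (g : 'M[R]_2) := [set pt_act p g | p in C].

Lemma cact_mul C A B : cact (cact C A) B = cact C (A *m B).
Proof.
by rewrite /cact -imset_comp; apply: eq_imset => p /=; rewrite pt_act_mul.
Qed.

Lemma cact1 C : cact C 1%:M = C.
Proof. by rewrite /cact (eq_imset (g := id)) ?imset_id // => p; exact: pt_act1. Qed.

Lemma chain_act C g : C \in chains K -> invertible2 g -> cact C g \in chains K.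
Proof.
case/imsetP=> h; rewrite inE => Hh -> Hg.
rewrite -[[set pt_act p h | p in _]]/(cact (base_chain K) h) cact_mul.
by apply/imsetP; exists (h *m g) => //; rewrite inE; exact: inv2_mul.
Qed.

Lemma N_act (g : 'M[R]_2) s : invertible2 g ->
  nchains_through K [seq pt_act p g | p <- s] = nchains_through K s.
Proof.
move=> Hg; have [N [H1 H2]] := inv2P Hg.
have HN : invertible2 N by apply: (@inv2_intro _ g).
have injF : injective (fun C => cact C g) by apply: imset_inj; exact: pt_act_inj.
have memF C p : (pt_act p g \in cact C g) = (p \in C).
  by apply: mem_imset; exact: pt_act_inj.
have allF C : all (fun p => p \in cact C g) [seq pt_act p g | p <- s] =
              all (fun p => p \in C) s.
  by rewrite all_map; apply: eq_all => p /=; rewrite memF.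
rewrite /nchains_through.
symmetry; rewrite -(card_imset _ injF); apply: eq_card => C'.
rewrite [in RHS]inE; apply/imsetP/andP; last first.
  case=> HC' Hall; exists (cact C' N).
    by rewrite inE chain_act // -allF cact_mul H2 cact1.
  by rewrite cact_mul H2 cact1.
case=> C; rewrite inE => /andP[HC Hall] ->; split.
  exact: chain_act.
by rewrite allF.
Qed.


Lemma chain_distE C E x : C \in chains K -> E \in C -> x \in C ->
  distant E x = (x != E).
Proof.
move=> HC HE Hx; apply/idP/idP.
  by apply: contraTneq => ->; exact: distant_irr.
by move=> H; apply: (chain_dist HC HE Hx); rewrite eq_sym.
Qed.

Lemma lam1 p : p \in proj_line R -> nchains_through K [:: p] = nchains_through K [:: E1].
Proof. by case/trans1=> g Hg ->; rewrite -(N_act [:: E1] Hg). Qed.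

Lemma lam2 p1 p2 : distant p1 p2 ->
  nchains_through K [:: p1; p2] = nchains_through K [:: E1; E2].
Proof. by case/trans2=> g Hg [-> ->]; rewrite -(N_act [:: E1; E2] Hg). Qed.

Lemma lam3 t1 t2 t3 : distant t1 t2 -> distant t1 t3 -> distant t2 t3 ->
  nchains_through K [:: t1; t2; t3] = nchains_through K [:: E1; E2; E3].
Proof.
by move=> H1 H2 H3; case: (trans3 H1 H2 H3) => g Hg [-> -> ->];
  rewrite -(N_act [:: E1; E2; E3] Hg).
Qed.

End Sub.
End M2.

Lemma card_sum (B : finType) (Y : {set B}) (P : pred B) :
  #|[set y in Y | P y]| = (\sum_(y in Y) P y)%N.
Proof.
rewrite -sum1_card (eq_bigl (fun y => (y \in Y) && P y)); last by move=> y; rewrite inE.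
by rewrite big_mkcondr /=; apply: eq_bigr => y _; case: (P y).
Qed.

Lemma dcount (A B : finType) (X : {set A}) (Y : {set B}) (r : A -> B -> bool) :
  (\sum_(C in X) #|[set y in Y | r C y]| = \sum_(y in Y) #|[set C in X | r C y]|)%N.
Proof.
under eq_bigr do rewrite card_sum.
under [RHS]eq_bigr do rewrite card_sum.
exact: exchange_big.
Qed.

Theorem mainTheorem1 (R : finUnitRingType) (K : {set R}) (d : nat) :
  is_subfield K ->
  #|R| = (#|K| ^ d)%N ->
  let q := #|K| in
  let rstar := #|[set x : R | x \is a GRing.unit]| in
  let v := #|proj_line R| in
  forall (p : {set 'rV[R]_2}) (p1 p2 t1 t2 t3 : {set 'rV[R]_2}),
  p \in proj_line R ->
  distant p1 p2 ->
  distant t1 t2 -> distant t1 t3 -> distant t2 t3 ->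
  let lambda0 := #|chains K| in
  let lambda1 := nchains_through K [:: p] in
  let lambda2 := nchains_through K [:: p1; p2] in
  let lambda3 := nchains_through K [:: t1; t2; t3] in
  [/\ (lambda0%:R : rat) =
        (v * q ^ d.-1 * rstar)%:R / ((q ^ 2)%:R - 1) * lambda3%:R,
      (lambda1%:R : rat) = (q ^ d.-1 * rstar)%:R / (q%:R - 1) * lambda3%:R &
      (lambda2%:R : rat) = rstar%:R / (q%:R - 1) * lambda3%:R].
Proof.
move=> HK HR q rstar v p p1 p2 t1 t2 t3 Hp D12 Dt12 Dt13 Dt23 l0 l1 l2 l3.
have q1 : (1 < q)%N.
  apply/card_gt1P; exists 0, 1; split; [exact: K0 | exact: K1 |].
  by rewrite eq_sym oner_neq0.
set n1 := nchains_through K [:: E1 R].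
set n2 := nchains_through K [:: E1 R; E2 R].
set n3 := nchains_through K [:: E1 R; E2 R; E3 R].
have El1 : l1 = n1 by exact: lam1.
have El2 : l2 = n2 by exact: lam2.
have El3 : l3 = n3 by exact: lam3.
have Eq0 : (l0 * q.+1 = v * n1)%N.
  have := dcount (chains K) (proj_line R) (fun C p => p \in C).
  rewrite (eq_bigr (fun _ => q.+1)); last first.
    move=> C HC; rewrite -(chain_card HK HC); apply: eq_card => x.
    rewrite inE; apply: andb_idl => Hx; exact: (chain_proj HK HC Hx).
  rewrite (eq_bigr (fun _ => n1) (P := fun p => p \in proj_line R)); last first.
    move=> x Hx; rewrite /n1 -(lam1 K Hx) /nchains_through; apply: eq_card => C.
    by rewrite !inE /= andbT.
  by rewrite !sum_nat_const.
have Eq1 : (n1 * q = #|R| * n2)%N.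
  have := dcount [set C in chains K | all (fun p => p \in C) [:: E1 R]] (proj_line R)
            (fun C p => (p \in C) && distant (E1 R) p).
  rewrite (eq_bigr (fun _ => q)); last first.
    move=> C; rewrite inE /= andbT => /andP[HC HE1].
    have -> : #|[set y in proj_line R | (y \in C) && distant (E1 R) y]| = #|C :\ E1 R|.
      apply: eq_card => x; rewrite inE in_setD1.
      case Hx: (x \in C); last by rewrite !andbF.
      by rewrite (chain_proj HK HC Hx) (chain_distE HK HC HE1 Hx) andbT.
    by have := cardsD1 (E1 R) C; rewrite (chain_card HK HC) HE1 add1n => -[].
  rewrite sum_nat_const.
  rewrite (eq_bigr (fun p => n2 * distant (E1 R) p)%N (P := fun p => p \in proj_line R)); last first.
    move=> x Hx; case Hd: (distant (E1 R) x).
      rewrite muln1 /n2 -(lam2 K Hd) /nchains_through; apply: eq_card => C.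
      rewrite !inE /= !andbT.
      by case: (C \in chains K); case: (E1 R \in C); case: (x \in C).
    rewrite muln0; apply/eqP; rewrite cards_eq0; apply/eqP/setP => C.
    by rewrite !inE !andbF.
  rewrite -big_distrr /= -card_sum D1_card => ->.
  by rewrite mulnC.
have Eq2 : (n2 * q.-1 = rstar * n3)%N.
  have := dcount [set C in chains K | all (fun p => p \in C) [:: E1 R; E2 R]] (proj_line R)
            (fun C p => (p \in C) && (distant (E1 R) p && distant (E2 R) p)).
  rewrite (eq_bigr (fun _ => q.-1)); last first.
    move=> C; rewrite inE /= andbT => /and3P[HC HE1 HE2].
    have -> : #|[set y in proj_line R | (y \in C) && (distant (E1 R) y && distant (E2 R) y)]|
              = #|(C :\ E1 R) :\ E2 R|.
      apply: eq_card => x; rewrite inE !in_setD1.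
      case Hx: (x \in C); last by rewrite !andbF.
      rewrite (chain_proj HK HC Hx) (chain_distE HK HC HE1 Hx) (chain_distE HK HC HE2 Hx).
      by case: (x != E1 R); case: (x != E2 R).
    have HE21 : E2 R \in C :\ E1 R.
      rewrite !inE HE2 andbT; apply/eqP => E.
      by move: (distE1E2 R) (distant_irr (E1 R)); rewrite E => ->.
    have := cardsD1 (E1 R) C; rewrite (chain_card HK HC) HE1 add1n => -[].
    by move=> E; rewrite /q E [in RHS](cardsD1 (E2 R)) HE21 add1n.
  rewrite sum_nat_const.
  rewrite (eq_bigr (fun p => n3 * (distant (E1 R) p && distant (E2 R) p))%N
              (P := fun p => p \in proj_line R)); last first.
    move=> x Hx; case Hd1: (distant (E1 R) x); case Hd2: (distant (E2 R) x); last first.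
    - rewrite muln0; apply/eqP; rewrite cards_eq0; apply/eqP/setP => C.
      by rewrite !inE !andbF.
    - rewrite muln0; apply/eqP; rewrite cards_eq0; apply/eqP/setP => C.
      by rewrite !inE !andbF.
    - rewrite muln0; apply/eqP; rewrite cards_eq0; apply/eqP/setP => C.
      by rewrite !inE !andbF.
    rewrite muln1 /n3 -(lam3 K (distE1E2 R) Hd1 Hd2) /nchains_through; apply: eq_card => C.
    rewrite !inE /= !andbT.
    by case: (C \in chains K); case: (E1 R \in C); case: (E2 R \in C); case: (x \in C).
  rewrite -big_distrr /= -card_sum D2_card => ->.
  by rewrite mulnC.
have qR : (q <= #|R|)%N by apply: max_card.
have d0 : (0 < d)%N.
  case: d HR => // HR0; move: qR; rewrite HR0 expn0 => H.
  by move: (leq_trans q1 H).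
have Eq1' : n1 = (q ^ d.-1 * n2)%N.
  apply/eqP; rewrite -(@eqn_pmul2l q) ?(ltn_trans _ q1) //.
  by rewrite mulnA -expnS prednK // -HR mulnC Eq1.
have hq1 : (q%:R : rat) - 1 != 0.
  by rewrite subr_eq0 Num.Theory.pnatr_eq1 neq_ltn q1 orbT.
have hq2 : (q%:R : rat) + 1 != 0.
  by rewrite natr1 Num.Theory.pnatr_eq0.
have e2 : (n2%:R : rat) = rstar%:R * n3%:R / (q%:R - 1).
  have : ((n2 * q.-1)%:R : rat) = (rstar * n3)%:R by rewrite Eq2.
  rewrite !natrM -subn1 natrB ?(ltnW q1) // => <-.
  by rewrite mulfK.
have e1 : (n1%:R : rat) = (q ^ d.-1)%:R * n2%:R by rewrite Eq1' natrM.
have e0 : (l0%:R : rat) = v%:R * n1%:R / (q%:R + 1).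
  have : ((l0 * q.+1)%:R : rat) = (v * n1)%:R by rewrite Eq0.
  rewrite !natrM -addn1 natrD => <-.
  by rewrite mulfK.
rewrite El1 El2 El3; split.
- rewrite e0 e1 e2 !natrM natrX; field.
  have -> : (q%:R * q%:R - 1 : rat) = (q%:R - 1) * (q%:R + 1) by ring.
  by rewrite mulf_neq0 // hq1 hq2.
- rewrite e1 e2 !natrM; field; exact: hq1.
- rewrite e2; field; exact: hq1.
Qed.
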